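(* Let $(\omega_k)_k$ be formulas indexed by integers, and let $\chi,\psi$ be formulas. Suppose $(i_1,\dots,i_n)$, $(j_1,\dots,j_m)$, $(k_1,\dots,k_p)$ are strictly increasing sequences of integers with $\{k_1,\dots,k_p\}=\{i_1,\dots,i_n,j_1,\dots,j_m\}$, and that either $n=0$, or ($n>0$, $m>0$ and $i_n\le j_m$). If $\vdash_{\mathsf{BB'IW}}\omega_{i_1}\dots\omega_{i_n}\to(\chi\to\psi)$ and $\vdash_{\mathsf{BB'IW}}\omega_{j_1}\dots\omega_{j_m}\to\chi$, then $\vdash_{\mathsf{BB'IW}}\omega_{k_1}\dots\omega_{k_p}\to\psi$.
   Context: Formulas are built from propositional atoms with $\to$; $\phi_1\dots\phi_n\to\psi$ denotes $\phi_1\to(\dots(\phi_n\to\psi)\dots)$ if $n>0$ and $\psi$ if $n=0$. $\vdash_{\mathsf{BB'IW}}\phi$ means that $\phi$ is derivable by modus ponens from the axioms consisting of all instances of $(\chi\to\psi)\to((\phi\to\chi)\to(\phi\to\psi))$ (${\sf B}$), $(\phi\to\chi)\to((\chi\to\psi)\to(\phi\to\psi))$ (${\sf B'}$), $\phi\to\phi$ (${\sf I}$), $(\phi\to(\phi\to\chi))\to(\phi\to\chi)$ (${\sf W}$); equivalently, some combinator over the basis ${\sf B},{\sf B'},{\sf I},{\sf W}$ has type $\phi$. *)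

(* Defs.v *)
From Stdlib Require Import ZArith List Sorted.
Import ListNotations.

Inductive formula : Type :=
| Atom : nat -> formula
| Imp : formula -> formula -> formula.

Fixpoint imps (l : list formula) (psi : formula) : formula :=
  match l with
  | [] => psi
  | phi :: l' => Imp phi (imps l' psi)
  end.

Inductive BBIW : formula -> Prop :=
| ax_B : forall phi chi psi,
    BBIW (Imp (Imp chi psi) (Imp (Imp phi chi) (Imp phi psi)))
| ax_B' : forall phi chi psi,
    BBIW (Imp (Imp phi chi) (Imp (Imp chi psi) (Imp phi psi)))
| ax_I : forall phi, BBIW (Imp phi phi)
| ax_W : forall phi chi,
    BBIW (Imp (Imp phi (Imp phi chi)) (Imp phi chi))
| mp : forall phi psi, BBIW (Imp phi psi) -> BBIW phi -> BBIW psi.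

Definition strictly_increasing (l : list Z) : Prop := Sorted Z.lt l.

(* Main.v *)
Require Import Defs.
From Stdlib Require Import ZArith List Sorted Lia.
Import ListNotations.

Lemma trans_ X Y Z : BBIW (Imp X Y) -> BBIW (Imp Y Z) -> BBIW (Imp X Z).
Proof. intros h1 h2. exact (mp _ _ (mp _ _ (ax_B' X Y Z) h1) h2). Qed.

Lemma lift_imp l A B : BBIW (Imp A B) -> BBIW (Imp (imps l A) (imps l B)).
Proof.
  induction l as [|a l IH]; simpl; intro h; auto.
  exact (mp _ _ (ax_B a _ _) (IH h)).
Qed.

Lemma lift l A B : BBIW (Imp A B) -> BBIW (imps l A) -> BBIW (imps l B).
Proof. intros h1 h2. exact (mp _ _ (lift_imp l A B h1) h2). Qed.

Lemma imps_app l1 l2 A : imps (l1 ++ l2) A = imps l1 (imps l2 A).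
Proof. induction l1; simpl; congruence. Qed.

Lemma thS a b c : BBIW (Imp (Imp a (Imp b c)) (Imp (Imp a b) (Imp a c))).
Proof.
  assert (F1 := ax_B' a (Imp b c) (Imp a c)).
  assert (F2 := mp _ _ (ax_B' (Imp a b) (Imp (Imp b c) (Imp a c)) (Imp a (Imp a c)))
                  (ax_B' a b c)).
  assert (F12 := trans_ _ _ _ F1 F2).
  assert (BW := mp _ _ (ax_B (Imp a b) (Imp a (Imp a c)) (Imp a c)) (ax_W a c)).
  exact (trans_ _ _ _ F12 BW).
Qed.

Lemma thS' a b c : BBIW (Imp (Imp a b) (Imp (Imp a (Imp b c)) (Imp a c))).
Proof.
  assert (T1 := trans_ _ _ _ (ax_B' a b c) (ax_B a (Imp b c) (Imp a c))).
  assert (BW := mp _ _ (ax_B (Imp a (Imp b c)) (Imp a (Imp a c)) (Imp a c)) (ax_W a c)).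
  exact (trans_ _ _ _ T1 BW).
Qed.

Definition SS := StronglySorted Z.lt.

Lemma SS_app l1 l2 : SS (l1 ++ l2) ->
  SS l1 /\ SS l2 /\ (forall x y, In x l1 -> In y l2 -> (x < y)%Z).
Proof.
  induction l1 as [|a l1 IH]; simpl; intro h.
  - repeat split; auto. constructor. intros x y [].
  - apply StronglySorted_inv in h as [h1 h2].
    destruct (IH h1) as [A [B C]]. repeat split; auto.
    + constructor; auto. rewrite Forall_forall in *.
      intros x hx; apply h2, in_or_app; auto.
    + intros x y [<-|hx] hy; auto. rewrite Forall_forall in h2.
      apply h2, in_or_app; auto.
Qed.

Lemma toSS l : Sorted Z.lt l -> SS l.
Proof. apply Sorted_StronglySorted. intros x y z; lia. Qed.

Lemma ofSS l : SS l -> Sorted Z.lt l.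
Proof. apply StronglySorted_Sorted. Qed.

Lemma snoc_dec (l : list Z) : l = [] \/ exists l' a, l = l' ++ [a].
Proof.
  destruct l as [|x l]; [left; auto|right].
  destruct (exists_last (l:=x::l) ltac:(discriminate)) as [l' [a e]]. eauto.
Qed.

Lemma le_last l x : SS l -> In x l -> (x <= last l 0)%Z.
Proof.
  intros hs hx. destruct (snoc_dec l) as [->|[l' [a ->]]]; [destruct hx|].
  rewrite last_last. apply SS_app in hs as [_ [_ C]].
  apply in_app_iff in hx as [hx|[<-|[]]]; [|lia].
  specialize (C x a hx (or_introl eq_refl)). lia.
Qed.

Definition cond (is js : list Z) :=
  is = [] \/ (js <> [] /\ (last is 0 <= last js 0)%Z).

Lemma core omega : forall n is js ks chi psi,
  length is + length js <= n ->
  SS is -> SS js -> SS ks ->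
  (forall x, In x ks <-> In x is \/ In x js) ->
  cond is js ->
  BBIW (imps (map omega is) (Imp chi psi)) ->
  BBIW (imps (map omega js) chi) ->
  BBIW (imps (map omega ks) psi).
Proof.
  induction n as [|n IH]; intros is js ks chi psi hlen sis sjs sks mem hc hma hmi.
  all: destruct (snoc_dec js) as [->|[J [j ->]]].
  all: try (destruct hc as [->|[hc _]]; [|congruence];
    destruct ks as [|k ks]; [simpl in *; exact (mp _ _ hma hmi)|];
    destruct (proj1 (mem k) (or_introl eq_refl)) as [[]|[]]).
  { rewrite length_app in hlen; simpl in hlen; lia. }
  apply SS_app in sjs as [sJ [_ CJ]].
  assert (Jlt : forall x, In x J -> (x < j)%Z) by (intros; apply CJ; simpl; auto).
  assert (islt : forall x, In x is -> (x <= j)%Z).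
  { intros x hx. destruct hc as [->|[_ hc]]; [destruct hx|].
    rewrite last_last in hc. pose proof (le_last is x sis hx). lia. }
  assert (kle : forall x, In x ks -> (x <= j)%Z).
  { intros x hx. apply mem in hx as [hx|hx]; [auto|].
    apply in_app_iff in hx as [hx|[<-|[]]]; [pose proof (Jlt x hx)|]; lia. }
  assert (jin : In j ks) by (apply mem; right; apply in_or_app; simpl; auto).
  destruct (snoc_dec ks) as [->|[K [k ->]]]; [destruct jin|].
  assert (k = j) as ->.
  { pose proof (kle k ltac:(apply in_or_app; simpl; auto)).
    apply SS_app in sks as [_ [_ C]].
    apply in_app_iff in jin as [h|[h|[]]]; [|lia].
    specialize (C j k h (or_introl eq_refl)). lia. }
  apply SS_app in sks as [sK [_ CK]].
  assert (jK : ~ In j K) by (intro h; specialize (CK j j h (or_introl eq_refl)); lia).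
  assert (memK : forall x, In x K <-> (In x is \/ In x J \/ x = j) /\ x <> j).
  { intro x. split.
    - intro hx. split; [|intro; subst; auto].
      assert (In x (K ++ [j])) as h by (apply in_or_app; auto).
      apply mem in h as [h|h]; auto. apply in_app_iff in h as [h|[<-|[]]]; auto.
    - intros [h ne]. assert (In x (K ++ [j])) as h'.
      { apply mem. destruct h as [h|[h|h]]; auto; [right; apply in_or_app; auto|congruence]. }
      apply in_app_iff in h' as [h'|[<-|[]]]; [auto|congruence]. }
  rewrite map_app, imps_app. simpl.
  rewrite map_app, imps_app in hmi. simpl in hmi.
  assert (hlJ : length is + length J <= n) by (rewrite length_app in hlen; simpl in hlen; lia).
  destruct (snoc_dec is) as [His|[I [i His]]].
  2: destruct (Z.eq_dec i j) as [->|ne].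
  2: {
    subst is. rewrite map_app, imps_app in hma. simpl in hma.
    apply SS_app in sis as [sI [_ CI]].
    assert (Ilt : forall x, In x I -> (x < j)%Z) by (intros; apply CI; simpl; auto).
    assert (hlI : length I + length J <= n) by (rewrite length_app in hlJ; simpl in hlJ; lia).
    assert (memI : forall x, In x K <-> In x I \/ In x J).
    { intro x. rewrite memK, in_app_iff. simpl. split.
      - intros [[[h|[h|[]]]|[h|h]] ne]; auto; congruence.
      - intros [h|h]; split; [auto|pose proof (Ilt x h); lia|auto|pose proof (Jlt x h); lia]. }
    destruct (snoc_dec I) as [->|[I' [i' ->]]].
    - apply (IH [] J K (Imp (omega j) chi) (Imp (omega j) psi)); auto.
      + left; reflexivity.
      + simpl in *. exact (mp _ _ (thS _ _ _) hma).
    - assert (S'case : J = [] \/ (last J 0%Z < i')%Z ->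
                BBIW (imps (map omega K) (Imp (omega j) psi))).
      { intro hJ.
        apply (IH J (I' ++ [i']) K (Imp (omega j) (Imp chi psi)) (Imp (omega j) psi)); auto.
        * lia.
        * intro x; rewrite memI; tauto.
        * destruct hJ as [->|hJ]; [left; auto|right].
          split; [destruct I'; discriminate|]. rewrite !last_last in *. lia.
        * exact (lift _ _ _ (thS' _ _ _) hmi). }
      destruct (snoc_dec J) as [->|[J' [j' HJ]]]; [auto|].
      destruct (Z_le_gt_dec i' (last J 0%Z)) as [hle|hgt]; [|apply S'case; right; lia].
      apply (IH (I' ++ [i']) J K (Imp (omega j) chi) (Imp (omega j) psi)); auto.
      -- right. split; [subst J; destruct J'; discriminate|]. rewrite !last_last in *. lia.
      -- exact (lift _ _ _ (thS _ _ _) hma).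
  }
  all: assert (islt' : forall x, In x is -> (x < j)%Z).
  all: try (intros x hx; subst is; destruct hx).
  all: try (intros x hx; pose proof (le_last is x sis hx);
            pose proof (islt i ltac:(subst is; apply in_or_app; simpl; auto));
            subst is; rewrite last_last in *; lia).
  all: assert (memI : forall x, In x K <-> In x is \/ In x J).
  all: try (intro x; rewrite memK; split;
      [intros [[h|[h|h]] ne0]; auto; congruence
      |intros [h|h]; split; [auto|pose proof (islt' x h); lia|auto|pose proof (Jlt x h); lia]]).
  all: assert (B'case : J = [] \/ (is <> [] /\ (last J 0%Z < last is 0%Z))%Z ->
                BBIW (imps (map omega K) (Imp (omega j) psi)));
  [ intro hJ;
    apply (IH J is K (Imp chi psi) (Imp (omega j) psi)); auto;
    [ lia
    | intro x; rewrite memI; tauto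
    | destruct hJ as [->|[hJ1 hJ2]]; [left; auto|right; split; auto; lia]
    | exact (lift _ _ _ (ax_B' _ _ _) hmi) ] |].
  all: assert (Bcase : is = [] \/ (J <> [] /\ (last is 0%Z <= last J 0%Z))%Z ->
                BBIW (imps (map omega K) (Imp (omega j) psi)));
  [ intro hJ;
    apply (IH is J K (Imp (omega j) chi) (Imp (omega j) psi)); auto;
    exact (lift _ _ _ (ax_B _ _ _) hma) |].
  all: destruct (snoc_dec J) as [HJ|[J' [j' HJ]]]; [apply B'case; left; auto|].
  all: destruct (Z_le_gt_dec (last is 0%Z) (last J 0%Z)).
  all: try (apply Bcase; right; split; [subst J; destruct J'; discriminate|lia]).
  all: first [apply Bcase; left; assumption | apply B'case; right; split; [subst is; destruct I; discriminate|lia]].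
Qed.

Theorem lemma1p9 (omega : Z -> formula) (chi psi : formula)
  (is js ks : list Z) :
  strictly_increasing is ->
  strictly_increasing js ->
  strictly_increasing ks ->
  (forall x, In x ks <-> In x is \/ In x js) ->
  (is = [] \/
   (is <> [] /\ js <> [] /\ (last is 0%Z <= last js 0%Z)%Z)) ->
  BBIW (imps (map omega is) (Imp chi psi)) ->
  BBIW (imps (map omega js) chi) ->
  BBIW (imps (map omega ks) psi).
Proof.
  intros h1 h2 h3 hm hc ha hb.
  apply (core omega (length is + length js) is js ks chi psi); auto; try apply toSS; auto.
  destruct hc as [h|[_ h]]; [left|right]; auto.
Qed.
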